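(* Let $n\geq2$, and let $f,g:[0,\infty)\to[0,\infty)$ be continuous, log-concave functions, $C^2$-smooth on $(0,\infty)$, such that $f(0)>0$, $g(0)>0$ and $\int f<\infty$, $\int g<\infty$. Assume that for any $t\geq0$, $$ |f(t)-g(t)|\leq e^{-5n}\min\{f(0),g(0)\}. $$ Then $(1-e^{-n})t_n(g)\leq t_n(f)\leq(1+e^{-n})t_n(g)$.
   Context: For a continuous log-concave function $h:[0,\infty)\to[0,\infty)$, $C^2$-smooth on $(0,\infty)$, with $0<\int_0^\infty h<\infty$, and for $p>1$, $t_p(h)$ denotes the unique $t>0$ such that $h(t)>0$ and $h'(t)/h(t)=-(p-1)/t$ (under these assumptions such $t$ exists and is unique). A function $h\ge 0$ is log-concave if $h(\lambda x+(1-\lambda)y)\geq h(x)^\lambda h(y)^{1-\lambda}$. *)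

(* Defs.v *)
From Stdlib Require Import Reals Lra.
From Coquelicot Require Import Coquelicot.
Open Scope R_scope.

Definition rpow (a b : R) : R :=
  if Rlt_dec 0 a then Rpower a b
  else if Req_EM_T b 0 then 1 else 0.

(* h : [0,oo) -> [0,oo) (values of h on negative reals are irrelevant). *)
Definition nonneg_on_halfline (h : R -> R) : Prop :=
  forall t, 0 <= t -> 0 <= h t.

Definition continuous_on_halfline (h : R -> R) : Prop :=
  forall t, 0 <= t ->
    filterlim h (within (fun x => 0 <= x) (locally t)) (locally (h t)).

Definition log_concave_on_halfline (h : R -> R) : Prop :=
  forall x y l, 0 <= x -> 0 <= y -> 0 <= l <= 1 ->
    rpow (h x) l * rpow (h y) (1 - l) <= h (l * x + (1 - l) * y).

Definition C2_on_pos (h : R -> R) : Prop :=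
  forall t, 0 < t -> ex_derive_n h 2 t /\ continuous (Derive_n h 2) t.

Definition finite_positive_integral (h : R -> R) : Prop :=
  exists I, is_RInt_gen h (at_point 0) (Rbar_locally p_infty) I /\ 0 < I.

Definition is_t_p (p : R) (h : R -> R) (t : R) : Prop :=
  0 < t /\ 0 < h t /\ Derive h t / h t = - (p - 1) / t.

(* Main.v *)
Require Import Defs.
From Stdlib Require Import Reals Lra Psatz.
From Coquelicot Require Import Coquelicot.
Open Scope R_scope.

Lemma exp_mono x y : x <= y -> exp x <= exp y.
Proof. intros [H|H]; [left; now apply exp_increasing | subst; lra]. Qed.

Lemma lim_exp_seq (c s : R) :
  is_lim_seq (fun k => c * exp (/ (INR k + 1) * s)) c.
Proof.
  replace (Finite c) with (Rbar_mult c (Finite 1)) by (simpl; f_equal; ring).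
  apply is_lim_seq_scal_l.
  assert (Hd : is_lim_seq (fun k => / (INR k + 1) * s) 0).
  { replace (Finite 0) with (Rbar_mult (Finite 0) s) by (simpl; f_equal; ring).
    apply is_lim_seq_scal_r.
    eapply is_lim_seq_ext; [|apply (is_lim_seq_Rbar_loc_seq (Finite 0))].
    intros k; simpl; ring. }
  assert (He : filterlim exp (locally 0) (locally (exp 0))).
  { apply (ex_derive_continuous exp). auto_derive. auto. }
  rewrite exp_0 in He.
  eapply filterlim_comp; [exact Hd| exact He].
Qed.

Section Supp.
Variable h : R -> R.
Hypothesis hnn : nonneg_on_halfline h.
Hypothesis hlc : log_concave_on_halfline h.

Lemma lc_ln x y l : 0 <= x -> 0 <= y -> 0 <= l <= 1 -> 0 < h x -> 0 < h y ->
  0 < h (l * x + (1 - l) * y) /\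
  l * ln (h x) + (1 - l) * ln (h y) <= ln (h (l * x + (1 - l) * y)).
Proof.
  intros Hx Hy Hl Hhx Hhy.
  pose proof (hlc x y l Hx Hy Hl) as H.
  unfold rpow in H.
  destruct (Rlt_dec 0 (h x)) as [_|]; [|lra].
  destruct (Rlt_dec 0 (h y)) as [_|]; [|lra].
  unfold Rpower in H. rewrite <- exp_plus in H.
  assert (Hp : 0 < h (l * x + (1 - l) * y)).
  { eapply Rlt_le_trans; [apply exp_pos|exact H]. }
  split; auto.
  rewrite <- (ln_exp (l * ln (h x) + (1 - l) * ln (h y))).
  apply ln_le; [apply exp_pos|]. lra.
Qed.

Lemma chord_left s t d : 0 <= s -> s < t -> 0 < d -> 0 < h s -> 0 < h t ->
  h (t + d) <= h t * exp (d * ((ln (h t) - ln (h s)) / (t - s))).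
Proof.
  intros Hs Hst Hd Hhs Hht.
  assert (Hnn : 0 <= h (t + d)) by (apply hnn; lra).
  destruct (Req_dec (h (t + d)) 0) as [E|E].
  { rewrite E. apply Rmult_le_pos; [lra| left; apply exp_pos]. }
  assert (Hp : 0 < h (t + d)) by lra.
  set (A := t + d - s).
  set (l := d / A).
  assert (HA : 0 < A) by (unfold A; lra).
  assert (Hl : 0 <= l <= 1).
  { unfold l; split; [apply Rlt_le, Rdiv_lt_0_compat; lra|].
    apply Rmult_le_reg_r with A; auto. unfold Rdiv; rewrite Rmult_assoc, Rinv_l. idtac. all: unfold A in *; try lra. }
  destruct (lc_ln s (t + d) l Hs ltac:(lra) Hl Hhs Hp) as [_ H].
  replace (l * s + (1 - l) * (t + d)) with t in H by (unfold l, A; field; lra).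
  rewrite <- (exp_ln (h (t + d))) by auto.
  rewrite <- (exp_ln (h t)) at 1 by auto.
  rewrite <- exp_plus. apply exp_mono.
  set (a := ln (h s)) in *. set (b := ln (h t)) in *. set (c := ln (h (t + d))) in *.
  assert (Hl' : l * A = d) by (unfold l; field; lra).
  assert (H2 : A * b >= d * a + (A - d) * c).
  { replace (A - d) with ((1 - l) * A) by (rewrite Rmult_minus_distr_r, Hl'; ring).
    rewrite <- Hl'. nra. }
  assert (HAd : A - d = t - s) by (unfold A; ring).
  rewrite HAd in H2.
  apply Rmult_le_reg_r with (t - s); [lra|].
  replace ((b + d * ((b - a) / (t - s))) * (t - s)) with (b * (t - s) + d * (b - a)) by (field; lra).
  replace A with (t - s + d) in H2 by (unfold A; ring).
  nra.
Qed.

Lemma chord_right s t d : 0 <= t -> t < s -> 0 < d -> d <= s - t -> 0 < h s -> 0 < h t ->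
  h t * exp (d * ((ln (h s) - ln (h t)) / (s - t))) <= h (t + d).
Proof.
  intros Ht Hst Hd Hds Hhs Hht.
  set (l := d / (s - t)).
  assert (Hl : 0 <= l <= 1).
  { unfold l; split; [apply Rlt_le, Rdiv_lt_0_compat; lra|].
    apply Rmult_le_reg_r with (s - t); [lra|]. unfold Rdiv; rewrite Rmult_assoc, Rinv_l; lra. }
  destruct (lc_ln s t l ltac:(lra) Ht Hl Hhs Hht) as [Hp H].
  replace (l * s + (1 - l) * t) with (t + d) in H, Hp by (unfold l; field; lra).
  rewrite <- (exp_ln (h (t + d))) by auto.
  rewrite <- (exp_ln (h t)) at 1 by auto.
  rewrite <- exp_plus. apply exp_mono.
  replace (ln (h t) + d * ((ln (h s) - ln (h t)) / (s - t))) with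
    (l * ln (h s) + (1 - l) * ln (h t)) by (unfold l; field; lra).
  exact H.
Qed.
End Supp.

Lemma Derive_seq (h : R -> R) t :
  Derive h t = real (Lim_seq (fun k => (h (t + / (INR k + 1)) - h t) / / (INR k + 1))).
Proof.
  unfold Derive, Lim. f_equal. apply Lim_seq_ext. intros k. simpl.
  rewrite Rplus_0_l. reflexivity.
Qed.

Lemma exp_aux y : exp y - 1 <= y * exp y.
Proof.
  pose proof (exp_ineq1_le (- y)) as H.
  assert (E : exp (- y) * exp y = 1) by (rewrite <- exp_plus; replace (- y + y) with 0 by ring; apply exp_0).
  pose proof (exp_pos y). nra.
Qed.

Section Supp2.
Variable h : R -> R.
Hypothesis hnn : nonneg_on_halfline h.
Hypothesis hlc : log_concave_on_halfline h.
Variable t : R.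
Hypothesis Ht : 0 < t.
Hypothesis Hht : 0 < h t.
Let p := fun k => (h (t + / (INR k + 1)) - h t) / / (INR k + 1).

Lemma dpos k : 0 < / (INR k + 1).
Proof. apply Rinv_0_lt_compat. pose proof (pos_INR k). lra. Qed.

Lemma upper s : 0 <= s -> s < t -> 0 < h s ->
  Rbar_le (Lim_seq p) (Finite (h t * ((ln (h t) - ln (h s)) / (t - s)))).
Proof.
  intros Hs Hst Hhs.
  set (sg := (ln (h t) - ln (h s)) / (t - s)).
  rewrite <- (is_lim_seq_unique _ _ (lim_exp_seq (h t * sg) sg)).
  apply Lim_seq_le_loc. exists 0%nat. intros k _.
  unfold p. pose proof (dpos k) as Hd. set (d := / (INR k + 1)) in *.
  pose proof (chord_left h hnn hlc s t d Hs Hst Hd Hhs Hht) as H.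
  fold sg in H.
  pose proof (exp_aux (d * sg)).
  apply Rmult_le_reg_r with d; auto.
  replace ((h (t + d) - h t) / d * d) with (h (t + d) - h t) by (field; lra).
  assert (h t * (exp (d * sg) - 1) <= h t * (d * sg * exp (d * sg))) by (apply Rmult_le_compat_l; lra).
  nra.
Qed.

Lemma lower s : t < s -> 0 < h s ->
  Rbar_le (Finite (h t * ((ln (h s) - ln (h t)) / (s - t)))) (Lim_seq p).
Proof.
  intros Hst Hhs.
  set (sg := (ln (h s) - ln (h t)) / (s - t)).
  rewrite <- (Lim_seq_const (h t * sg)).
  apply Lim_seq_le_loc.
  destruct (archimed_cor1 (s - t) ltac:(lra)) as [N [HN HN0]].
  exists N. intros k Hk.
  unfold p. pose proof (dpos k) as Hd. set (d := / (INR k + 1)) in *.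
  assert (Hds : d <= s - t).
  { unfold d. apply Rle_trans with (/ INR N); [|lra].
    apply Rinv_le_contravar. apply lt_0_INR; lia.
    apply le_INR in Hk. lra. }
  pose proof (chord_right h hlc s t d ltac:(lra) Hst Hd Hds Hhs Hht) as H.
  fold sg in H.
  pose proof (exp_ineq1_le (d * sg)).
  apply Rmult_le_reg_r with d; auto.
  replace ((h (t + d) - h t) / d * d) with (h (t + d) - h t) by (field; lra).
  assert (h t * (1 + d * sg) <= h t * exp (d * sg)) by (apply Rmult_le_compat_l; lra).
  nra.
Qed.

Lemma support (hpos0 : 0 < h 0) (HD : Derive h t <> 0) s : 0 <= s ->
  h s <= h t * exp (Derive h t / h t * (s - t)).
Proof.
  intros Hs.
  assert (Hexp : forall a, 0 < h t * exp a) by (intros; apply Rmult_lt_0_compat; auto; apply exp_pos).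
  assert (Hnns : 0 <= h s) by (apply hnn; auto).
  destruct (Req_dec (h s) 0) as [E|E]; [rewrite E; left; apply Hexp|].
  assert (Hhs : 0 < h s) by lra.
  assert (HDe : Derive h t = real (Lim_seq p)) by (apply Derive_seq).
  assert (key : forall c, ln (h s) <= ln (h t) + c -> h s <= h t * exp c).
  { intros c Hc. rewrite <- (exp_ln (h s)) by auto. rewrite <- (exp_ln (h t)) at 1 by auto.
    rewrite <- exp_plus. apply exp_mono; auto. }
  apply key.
  destruct (Rtotal_order s t) as [Hlt|[Heq|Hgt]].
  - pose proof (upper s Hs Hlt Hhs) as U.
    assert (Dle : Derive h t <= h t * ((ln (h t) - ln (h s)) / (t - s))).
    { rewrite HDe. destruct (Lim_seq p) as [r| |] eqn:Er; simpl in *; try lra. }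
    assert (Derive h t / h t <= (ln (h t) - ln (h s)) / (t - s)).
    { apply Rmult_le_reg_r with (h t); auto.
      replace (Derive h t / h t * h t) with (Derive h t) by (field; lra).
      rewrite Rmult_comm. exact Dle. }
    assert (Derive h t / h t * (t - s) <= ln (h t) - ln (h s)).
    { apply Rmult_le_reg_r with (/ (t - s)). apply Rinv_0_lt_compat; lra.
      replace (Derive h t / h t * (t - s) * / (t - s)) with (Derive h t / h t) by (field; lra).
      exact H. }
    nra.
  - rewrite Heq. replace (t - t) with 0 by ring. rewrite Rmult_0_r, Rplus_0_r. lra.
  - pose proof (lower s Hgt Hhs) as L.
    pose proof (upper 0 ltac:(lra) Ht hpos0) as U.
    assert (Dge : h t * ((ln (h s) - ln (h t)) / (s - t)) <= Derive h t).
    { rewrite HDe. destruct (Lim_seq p) as [r| |] eqn:Er; simpl in *; try lra; try contradiction. }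
    assert ((ln (h s) - ln (h t)) / (s - t) <= Derive h t / h t).
    { apply Rmult_le_reg_r with (h t); auto.
      replace (Derive h t / h t * h t) with (Derive h t) by (field; lra).
      rewrite Rmult_comm. exact Dge. }
    assert (ln (h s) - ln (h t) <= Derive h t / h t * (s - t)).
    { apply Rmult_le_reg_r with (/ (s - t)). apply Rinv_0_lt_compat; lra.
      replace (Derive h t / h t * (s - t) * / (s - t)) with (Derive h t / h t) by (field; lra).
      replace ((ln (h s) - ln (h t)) * / (s - t)) with ((ln (h s) - ln (h t)) / (s - t)) by reflexivity.
      exact H. }
    lra.
Qed.
End Supp2.
Lemma final (a c eta X tf tg : R) : 0 < a -> a <= 1/4 -> 0 < eta -> eta <= a^4 / 2 ->
  0 <= X -> (1 - eta)^2 * (1 + X) <= 1 -> 0 < tf -> 0 < tg -> X * (tf * tg) = (tg - tf)^2 ->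
  (1 - a) * tg <= tf /\ tf <= (1 + a) * tg.
Proof.
  intros Ha Ha4 He He4 HX H1 Htf Htg HXe.
  assert (Ha2 : a^2 <= 1/16) by nra.
  assert (Hea : eta <= a^2 / 32) by nra.
  assert (HX3 : X <= 3 * eta).
  { assert ((1 - 2 * eta) * (1 + X) <= 1) by nra. nra. }
  assert (Hq : (tg - tf)^2 <= a^2 / 8 * (tf * tg)).
  { rewrite <- HXe. apply Rmult_le_compat_r; [nra|]. nra. }
  assert (H2 : tf <= 2 * tg).
  { destruct (Rle_lt_dec tf (2 * tg)) as [|Hc]; auto. exfalso.
    assert (tf^2 / 4 <= (tg - tf)^2) by nra.
    assert (a^2 / 8 * (tf * tg) < tf ^2 / 16) by nra. nra. }
  assert (Hq2 : (tg - tf)^2 <= (a * tg)^2) by nra.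
  split.
  - destruct (Rle_lt_dec ((1 - a) * tg) tf) as [|Hc]; auto. exfalso.
    assert (0 < a * tg) by nra.
    assert (a * tg < tg - tf) by lra.
    assert ((a * tg)^2 < (tg - tf)^2) by nra. lra.
  - destruct (Rle_lt_dec tf ((1 + a) * tg)) as [|Hc]; auto. exfalso.
    assert (0 < a * tg) by nra.
    assert (a * tg < tf - tg) by lra.
    assert ((a * tg)^2 < (tf - tg)^2) by nra.
    replace ((tf - tg)^2) with ((tg - tf)^2) in * by ring. lra.
Qed.

Lemma supp_tp (h : R -> R) (p t : R) : 1 < p ->
  nonneg_on_halfline h -> log_concave_on_halfline h -> 0 < h 0 ->
  is_t_p p h t -> forall s, 0 <= s -> h s <= h t * exp (- (p - 1) / t * (s - t)).
Proof.
  intros Hp hnn hlc h0 [Ht [Hht HD]] s Hs.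
  rewrite <- HD. apply support; auto.
  intros E. rewrite E in HD. unfold Rdiv in HD. rewrite Rmult_0_l in HD.
  assert (0 < (p - 1) * / t) by (apply Rmult_lt_0_compat; [lra|apply Rinv_0_lt_compat; lra]).
  lra.
Qed.

Theorem lemma4p4 (n : nat) (f g : R -> R) (tf tg : R) :
  (2 <= n)%nat ->
  nonneg_on_halfline f -> nonneg_on_halfline g ->
  continuous_on_halfline f -> continuous_on_halfline g ->
  log_concave_on_halfline f -> log_concave_on_halfline g ->
  C2_on_pos f -> C2_on_pos g ->
  0 < f 0 -> 0 < g 0 ->
  finite_positive_integral f -> finite_positive_integral g ->
  (forall t, 0 <= t -> Rabs (f t - g t) <= exp (- 5 * INR n) * Rmin (f 0) (g 0)) ->
  is_t_p (INR n) f tf -> is_t_p (INR n) g tg ->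
  (1 - exp (- INR n)) * tg <= tf /\ tf <= (1 + exp (- INR n)) * tg.
Proof.
  intros Hn fnn gnn _ _ flc glc _ _ f0 g0 _ _ Hdiff Htf Htg.
  set (p := INR n) in *.
  assert (Hp : 2 <= p) by (unfold p; replace 2 with (INR 2) by (simpl; ring); apply le_INR; auto).
  pose proof (supp_tp f p tf ltac:(lra) fnn flc f0 Htf) as Sf.
  pose proof (supp_tp g p tg ltac:(lra) gnn glc g0 Htg) as Sg.
  destruct Htf as [Htf [Hftf _]]. destruct Htg as [Htg [Hgtg _]].
  set (a := exp (- p)). set (c := exp (-1)).
  assert (Ha : 0 < a) by apply exp_pos.
  assert (Hc : 0 < c) by apply exp_pos.
  assert (E5 : exp (- 5 * p) = a^5).
  { unfold a. simpl. rewrite Rmult_1_r, <- !exp_plus. f_equal. ring. }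
  assert (Eac : exp (p - 1) * a = c).
  { unfold a, c. rewrite <- exp_plus. f_equal. ring. }
  assert (Hc2 : c <= 1/2).
  { pose proof (exp_ineq1_le 1). unfold c. replace (-1) with (- (1)) by ring. rewrite exp_Ropp.
    assert (0 < exp 1) by apply exp_pos.
    apply Rmult_le_reg_r with (exp 1); auto. rewrite Rinv_l; lra. }
  assert (Ha4 : a <= 1/4).
  { assert (a <= c * c). { unfold a, c. rewrite <- exp_plus. apply exp_mono. lra. } nra. }
  pose proof (Sf 0 ltac:(lra)) as Sf0.
  pose proof (Sg 0 ltac:(lra)) as Sg0.
  pose proof (Sf tg ltac:(lra)) as Sf1.
  pose proof (Sg tf ltac:(lra)) as Sg1.
  replace (- (p - 1) / tf * (0 - tf)) with (p - 1) in Sf0 by (field; lra).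
  replace (- (p - 1) / tg * (0 - tg)) with (p - 1) in Sg0 by (field; lra).
  set (E1 := exp (- (p - 1) / tf * (tg - tf))) in *.
  set (E2 := exp (- (p - 1) / tg * (tf - tg))) in *.
  set (X := (tg - tf)^2 / (tf * tg)).
  assert (HX0 : 0 <= X) by (unfold X; apply Rdiv_le_0_compat; [apply pow2_ge_0 | apply Rmult_lt_0_compat; lra]).
  assert (HXe : X * (tf * tg) = (tg - tf)^2) by (unfold X; field; lra).
  assert (E12 : E1 * E2 = exp (- (p - 1) * X)).
  { unfold E1, E2, X. rewrite <- exp_plus. f_equal. field. lra. }
  assert (HE : exp (- (p - 1) * X) * (1 + X) <= 1).
  { apply Rle_trans with (exp (- X) * (1 + X)).
    - apply Rmult_le_compat_r; [lra|]. apply exp_mono. nra.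
    - pose proof (exp_ineq1_le X).
      assert (exp (- X) * exp X = 1) by (rewrite <- exp_plus; replace (- X + X) with 0 by ring; apply exp_0).
      pose proof (exp_pos (- X)). nra. }
  set (eta := a^4 * c).
  assert (Hep : 0 < eta) by (unfold eta; apply Rmult_lt_0_compat; auto; apply pow_lt; auto).
  assert (He4 : eta <= a^4 / 2) by (unfold eta; pose proof (pow_lt a 4 Ha); nra).
  assert (HEp : 0 < exp (p - 1)) by apply exp_pos.
  assert (Hdel : exp (- 5 * p) * Rmin (f 0) (g 0) <= eta * f tf /\
                 exp (- 5 * p) * Rmin (f 0) (g 0) <= eta * g tg).
  { rewrite E5. pose proof (Rmin_l (f 0) (g 0)). pose proof (Rmin_r (f 0) (g 0)).
    assert (H5 : 0 < a^5) by (apply pow_lt; auto).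
    replace eta with (a^5 * exp (p - 1)) by (unfold eta; rewrite <- Eac; ring).
    split.
    - rewrite Rmult_assoc. apply Rmult_le_compat_l; [lra|].
      apply Rle_trans with (f 0); auto. lra.
    - rewrite Rmult_assoc. apply Rmult_le_compat_l; [lra|].
      apply Rle_trans with (g 0); auto. lra. }
  pose proof (Hdiff tg ltac:(lra)) as D1.
  pose proof (Hdiff tf ltac:(lra)) as D2.
  apply Rabs_le_between' in D1. apply Rabs_le_between' in D2.
  destruct Hdel as [Hd1 Hd2].
  assert (L1 : (1 - eta) * g tg <= f tg) by lra.
  assert (L2 : (1 - eta) * f tf <= g tf) by lra.
  assert (Haa : a * a <= 1/16) by nra.
  assert (Ha44 : a^4 <= 1/256) by (replace (a^4) with ((a*a)*(a*a)) by ring; nra).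
  assert (Heta1 : eta <= 1/2) by lra.
  assert (HE1 : 0 < E1) by apply exp_pos.
  assert (HE2 : 0 < E2) by apply exp_pos.
  assert (Prod : ((1 - eta) * g tg) * ((1 - eta) * f tf) <= (f tf * E1) * (g tg * E2)).
  { apply Rmult_le_compat; try nra. }
  assert (Hfg : 0 < f tf * g tg) by nra.
  assert (Key : (1 - eta)^2 <= E1 * E2).
  { apply Rmult_le_reg_r with (f tf * g tg); auto. nra. }
  apply (final a c eta X); auto.
  rewrite E12 in Key. nra.
Qed.
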